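(* Consider a partially observed Markov decision process whose latent state at time $t$ is a vector $\mathbf{s}_t=(s_{1,t},\dots,s_{d,t})$, with observations $o_t$, actions $a_t$, rewards $r_t$ and discounted cumulative reward $R_t=\sum_{t'\ge t}\gamma^{t'-t}r_{t'}$, generated according to the causal graph described in the context. Assume that the graphical representation corresponding to this environment model is Markov and faithful to the distribution of the measured data. Then for every state dimension $s_{i,t}$ of $\mathbf{s}_t$: (1) $s_{i,t}\in s^{ar}_t$ iff $s_{i,t}\not\perp\!\!\!\perp R_t\mid a_{t-1:t},s^r_{t-1}$ and $s_{i,t}\not\perp\!\!\!\perp a_{t-1}\mid \mathbf{s}_{t-1}$; (2) $s_{i,t}\in s^{\bar a r}_t$ iff $s_{i,t}\not\perp\!\!\!\perp R_t\mid a_{t-1:t},s^r_{t-1}$ and $s_{i,t}\perp\!\!\!\perp a_{t-1}\mid \mathbf{s}_{t-1}$; (3) $s_{i,t}\in s^{a\bar r}_t$ iff $s_{i,t}\perp\!\!\!\perp R_t\mid a_{t-1:t},s^r_{t-1}$ and $s_{i,t}\not\perp\!\!\!\perp a_{t-1}\mid \mathbf{s}_{t-1}$; (4) $s_{i,t}\in s^{\bar a\bar r}_t$ iff $s_{i,t}\perp\!\!\!\perp R_t\mid a_{t-1:t},s^r_{t-1}$ and $s_{i,t}\perp\!\!\!\perp a_{t-1}\mid \mathbf{s}_{t-1}$.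
   Context: The latent state is partitioned into four blocks $\mathbf{s}_t=(s^{ar}_t,s^{\bar a r}_t,s^{a\bar r}_t,s^{\bar a\bar r}_t)$ according to the causal graph over time: (i) $s^{ar}_t$: dimensions with an incoming edge from $a_{t-1}$ and a directed path to $r_t$; (ii) $s^{\bar a r}_t$: no incoming edge from $a_{t-1}$ but a directed path to $r_t$; (iii) $s^{a\bar r}_t$: an incoming edge from $a_{t-1}$ and no directed path to $r_t$; (iv) $s^{\bar a\bar r}_t$: neither. Write $s^r_t:=(s^{ar}_t,s^{\bar a r}_t)$, $s^{\bar r}_t:=(s^{a\bar r}_t,s^{\bar a\bar r}_t)$. The graph has the following edges (and no others among these variables): $a_{t-1}\to s^{ar}_t$ and $a_{t-1}\to s^{a\bar r}_t$; $s^r_{t-1}\to s^{ar}_t$ and $s^r_{t-1}\to s^{\bar a r}_t$; $\mathbf{s}_{t-1}\to s^{a\bar r}_t$ and $\mathbf{s}_{t-1}\to s^{\bar a\bar r}_t$; $\mathbf{s}_t\to o_t$; $s^r_t\to r_t$; and possibly $s^r_t\to a_t$. There are no instantaneous causal effects among latent state variables; actions do not directly affect observations. $\gamma\in[0,1]$ is the discount factor and $a_{t-1:t}=(a_{t-1},a_t)$. ''Markov'' means every d-separation in the graph implies the corresponding conditional independence; ''faithful'' means there are no conditional independences other than those implied by the Markov condition. *)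

(* Defs.v *)
From mathcomp Require Import ssreflect ssrfun ssrbool eqtype ssrnat fintype.
From Stdlib Require Import Reals Relations.
From Stdlib Require List.

Set Implicit Arguments.
Unset Strict Implicit.
Unset Printing Implicit Defensive.
Local Open Scope list_scope.

(* Sd i t : latent state dimension s_{i,t};  A t : action a_t;
   O t : observation o_t;  Rw t : reward r_t;
   Ret t : discounted cumulative reward R_t = sum_{t'>=t} gamma^(t'-t) r_{t'}. *)
Inductive node (d : nat) : Type :=
| Sd of 'I_d & nat
| A of nat
| O of nat
| Rw of nat
| Ret of nat.

Arguments A {d}. Arguments O {d}. Arguments Rw {d}. Arguments Ret {d}.

Section Graph.
Variable d : nat.
Notation node := (node d).
Implicit Types (G : node -> node -> Prop) (X Y Z : node -> Prop).

Definition adj G (u v : node) : Prop := G u v \/ G v u.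

Definition anc_of G Z (v : node) : Prop :=
  exists w, clos_refl_trans node G v w /\ Z w.

Fixpoint is_walk G (p : list node) : Prop :=
  match p with
  | x :: ((y :: _) as q) => adj G x y /\ is_walk G q
  | _ => True
  end.

Fixpoint active_interior G Z (p : list node) : Prop :=
  match p with
  | x :: ((y :: z :: _) as q) =>
      ((G x y /\ G z y) -> anc_of G Z y) /\
      (~ (G x y /\ G z y) -> ~ Z y) /\
      active_interior G Z q
  | _ => True
  end.

Definition d_connected G X Y Z : Prop :=
  exists (x : node) (p : list node),
    X x /\ Y (List.last p x) /\ List.NoDup (x :: p) /\
    is_walk G (x :: p) /\ active_interior G Z (x :: p).

Definition d_separated G X Y Z : Prop := ~ d_connected G X Y Z.

Definition disjoint3 X Y Z : Prop :=
  (forall v, X v -> Y v -> False) /\ (forall v, X v -> Z v -> False) /\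
  (forall v, Y v -> Z v -> False).

(* An independence model  indep X Y Z  ("X is independent of Y given Z"
   in the distribution of the measured data) is Markov / faithful w.r.t. G. *)
Definition markov G (indep : (node -> Prop) -> (node -> Prop) -> (node -> Prop) -> Prop) :=
  forall X Y Z, disjoint3 X Y Z -> d_separated G X Y Z -> indep X Y Z.

Definition faithful G (indep : (node -> Prop) -> (node -> Prop) -> (node -> Prop) -> Prop) :=
  forall X Y Z, disjoint3 X Y Z -> indep X Y Z -> d_separated G X Y Z.

Definition in_a G (i : 'I_d) (t : nat) : Prop :=
  match t with 0 => False | t'.+1 => G (A t') (Sd i t) end.

Definition in_r G (i : 'I_d) (t : nat) : Prop :=
  clos_trans node G (Sd i t) (Rw t).

Definition in_ar G i t := in_a G i t /\ in_r G i t.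
Definition in_nar G i t := ~ in_a G i t /\ in_r G i t.
Definition in_anr G i t := in_a G i t /\ ~ in_r G i t.
Definition in_nanr G i t := ~ in_a G i t /\ ~ in_r G i t.

(* Edges allowed by the context ("these edges and no others"):
   a_{t-1} -> s^{ar}_t, s^{a r-bar}_t;  s^r_{t-1} -> s^r_t;  s_{t-1} -> s^{r-bar}_t;
   s_t -> o_t;  s^r_t -> r_t;  s^r_t -> a_t;  r_{t'} -> R_t (t' >= t, nonzero weight). *)
Definition allowed_edge G (gamma : R) (u v : node) : Prop :=
  match u, v with
  | A t, Sd _ t' => t' = t.+1
  | Sd j t, Sd i t' => t' = t.+1 /\ (in_r G i t' -> in_r G j t)
  | Sd _ t, O t' => t' = t
  | Sd _ t, Rw t' => t' = t
  | Sd i t, A t' => t' = t /\ in_r G i t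
  | Rw t', Ret t => (t <= t')%N /\ (t' = t \/ gamma <> 0%R)
  | _, _ => False
  end.

Definition env_graph G (gamma : R) : Prop :=
  (forall u v, G u v -> allowed_edge G gamma u v) /\
  (forall t t', G (Rw t') (Ret t) <-> ((t <= t')%N /\ (t' = t \/ gamma <> 0%R))).

Definition single (x : node) : node -> Prop := fun v => v = x.

(* a_{t-1:t} together with s^r_{t-1}, for current time t.+1 *)
Definition cond_R G (t : nat) : node -> Prop :=
  fun v => v = A t \/ v = A t.+1 \/ exists j, v = Sd j t /\ in_r G j t.

(* s_{t-1} (all dimensions), for current time t.+1 *)
Definition cond_a (t : nat) : node -> Prop :=
  fun v => exists j, v = Sd j t.

End Graph.

(* Main.v *)
Require Import Defs.
From mathcomp Require Import ssreflect ssrfun ssrbool eqtype ssrnat fintype.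
From Stdlib Require Import Reals Relations.
From Stdlib Require Import Lia Classical.
From mathcomp Require Import zify.
From Stdlib Require List.
Set Implicit Arguments.
Unset Strict Implicit.

Lemma no2cycle d (G : node d -> node d -> Prop) gamma
  (hE : forall u v, G u v -> allowed_edge G gamma u v) u v :
  G u v -> G v u -> False.
Proof.
move=> H1 H2; have := hE _ _ H1; have := hE _ _ H2.
destruct u; destruct v => /=; intuition lia.
Qed.

Lemma closed_rt d (G : node d -> node d -> Prop) (Q : node d -> Prop)
  (HQ : forall u v, G u v -> Q u -> Q v) u w :
  clos_refl_trans _ G u w -> Q u -> Q w.
Proof.
elim=> [x y /HQ //|//|x y z _ h1 _ h2 /h1 /h2 //].
Qed.

Lemma no_anc d (G : node d -> node d -> Prop) (Q Z : node d -> Prop)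
  (HQ : forall u v, G u v -> Q u -> Q v) (HZ : forall w, Q w -> ~ Z w) y :
  Q y -> anc_of G Z y -> False.
Proof. move=> Qy [w [Hw Zw]]; exact: (HZ w (closed_rt HQ Hw Qy) Zw). Qed.

Lemma last_cons_eq {T} (p : list T) (y s : T) :
  List.last (y :: p) s = List.last p y.
Proof. revert y s; induction p as [|a p IH]; intros y s; [reflexivity|]. change (List.last (a :: p) s = List.last (a :: p) y). rewrite IH. symmetry; apply IH. Qed.

Lemma walk_inv d (G : node d -> node d -> Prop) (Z : node d -> Prop)
  (Inv : node d -> node d -> Prop)
  (step : forall x y z, Inv x y -> adj G y z ->
     ((G x y /\ G z y) -> anc_of G Z y) -> (~(G x y /\ G z y) -> ~ Z y) ->
     Inv y z) :
  forall p x y, is_walk G (x :: y :: p) -> active_interior G Z (x :: y :: p) ->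
    Inv x y -> exists u, Inv u (List.last p y).
Proof.
elim=> [|z p IH] x y.
  by move=> _ _ h; exists x.
rewrite last_cons_eq => /= [[_ [hyz hw]]] [h1 [h2 ha]] hi.
apply: (IH y z) => //=.
exact: (step _ _ _ hi hyz h1 h2).
Qed.

Definition Pa d (t : nat) (v : node d) : Prop :=
  match v with Sd _ t' => (t < t')%coq_nat | A t' => (t < t')%coq_nat | _ => True end.

Lemma Pa_closed d (G : node d -> node d -> Prop) gamma
  (hE : forall u v, G u v -> allowed_edge G gamma u v) t u v :
  G u v -> Pa t u -> Pa t v.
Proof.
move=> H; have := hE _ _ H.
destruct u; destruct v => /=; intuition lia.
Qed.

Lemma part_a d (G : node d -> node d -> Prop) gamma
  (hE : forall u v, G u v -> allowed_edge G gamma u v) t i :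
  G (A t) (Sd i t.+1) <->
  d_connected G (single (Sd i t.+1)) (single (A t)) (@cond_a d t).
Proof.
split.
  move=> H; exists (Sd i t.+1), (cons (A t) nil); rewrite /single /=.
  split; first done. split; first done. split.
    constructor; [simpl; intros [H1|[]]; discriminate|].
    constructor; [intros []|constructor].
  by split; [split; [right|]|].
move=> [x [p [Hx [Hl [_ [Hw Ha]]]]]].
apply: NNPP => nG.
rewrite /single in Hx; subst x.
case: p Hl Hw Ha => [|y p] Hl Hw Ha; first by [].
pose Inv := fun u v => (G u v /\ Pa t v) \/ (exists j, v = Sd j t /\ G v u).
have step : forall x y z, Inv x y -> adj G y z ->
     ((G x y /\ G z y) -> anc_of G (@cond_a d t) y) ->
     (~(G x y /\ G z y) -> ~ (@cond_a d t) y) -> Inv y z.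
  move=> x0 y0 z0 [[Gxy Py]|[j [-> Gyx]]] [Gyz|Gzy] h1 h2.
  - by left; split => //; exact: (Pa_closed hE Gyz Py).
  - exfalso; apply: (no_anc (Q := Pa t) (Z := @cond_a d t) _ _ Py (h1 (conj Gxy Gzy))).
      by move=> u v; exact: (Pa_closed hE).
    by move=> w Pw [j Hj]; subst w; move: Pw => /=; lia.
  - exfalso; apply: h2; last by exists j.
    by move=> [Gxy _]; exact: (no2cycle hE Gxy Gyx).
  - exfalso; apply: h2; last by exists j.
    by move=> [Gxy _]; exact: (no2cycle hE Gxy Gyx).
have init : Inv (Sd i t.+1) y.
  move: Hw => /= [[Gsy|Gys] _].
    by left; split => //; apply: (Pa_closed hE Gsy) => /=; lia.
  move: (hE _ _ Gys) => Ay.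
  destruct y as [o n|n|n|n|n]; simpl in Ay; try done.
  - right; exists o; split => //.
    case: Ay => Hn _; have Hn2 : n = t by lia.
    by subst n.
  - exfalso; apply: nG; have Hn : n = t by lia.
    by subst n.
have [u Hu] := walk_inv step Hw Ha init.
move: Hl; rewrite last_cons_eq /single => Hl; rewrite Hl in Hu.
case: Hu => [[_ /= Hu]|[j [Hj _]]] //; lia.
Qed.

Definition Pb d (t : nat) (v : node d) : Prop :=
  match v with Sd _ t' => (t.+1 < t')%coq_nat | A t' => (t < t')%coq_nat | _ => True end.

Lemma Pab d (G : node d -> node d -> Prop) gamma
  (hE : forall u v, G u v -> allowed_edge G gamma u v) t u v :
  G u v -> Pa t u -> Pb t v.
Proof.
move=> H; have := hE _ _ H.
destruct u; destruct v => /=; intuition lia.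
Qed.

Lemma ct_Pb d (G : node d -> node d -> Prop) gamma
  (hE : forall u v, G u v -> allowed_edge G gamma u v) t u w :
  clos_trans _ G u w -> Pa t u -> Pb t w.
Proof.
elim=> [x y H|x y z _ IH1 _ IH2] Px; first exact: (Pab hE H).
apply: IH2; have := IH1 Px; case: (y) => //= *; lia.
Qed.

Definition NF d (G : node d -> node d -> Prop) (t : nat) (v : node d) : Prop :=
  match v with Sd k t' => (t < t')%coq_nat /\ ~ in_r G k t' | O _ => True | _ => False end.

Definition Past d (t : nat) (v : node d) : Prop :=
  match v with
  | Sd _ t' => (t' <= t)%coq_nat | A t' => (t' < t)%coq_nat | O _ => True
  | Rw t' => (t' <= t)%coq_nat | Ret t' => (t' <= t)%coq_nat end.

Definition Sink d (v : node d) : Prop :=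
  match v with O _ => True | Ret _ => True | _ => False end.

Lemma NF_closed d (G : node d -> node d -> Prop) gamma
  (hE : forall u v, G u v -> allowed_edge G gamma u v) t u v :
  G u v -> NF G t u -> NF G t v.
Proof.
move=> H; have := hE _ _ H.
destruct u as [k t1|t1|t1|t1|t1]; destruct v as [k2 t2|t2|t2|t2|t2] => //=.
- move=> [-> Himp] [Ht Hn]; split; first lia.
  by move/Himp.
- by move=> [_ Hr] [_ Hn].
- move=> Ht [_ Hn]; apply: Hn; subst; exact: t_step.
Qed.

Lemma Sink_closed d (G : node d -> node d -> Prop) gamma
  (hE : forall u v, G u v -> allowed_edge G gamma u v) u v :
  G u v -> Sink u -> Sink v.
Proof. move=> H; have := hE _ _ H; by destruct u; destruct v. Qed.

Lemma part_b d (G : node d -> node d -> Prop) gamma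
  (hE : forall u v, G u v -> allowed_edge G gamma u v)
  (hR : forall t t', G (Rw t') (Ret t) <-> ((t <= t')%N /\ (t' = t \/ gamma <> 0%R)))
  t i :
  in_r G i t.+1 <->
  d_connected G (single (Sd i t.+1)) (single (Ret t.+1)) (cond_R G t).
Proof.
split.
  move=> Hr.
  have Gs : G (Sd i t.+1) (Rw t.+1).
    have H0 := clos_trans_tn1 _ _ _ _ Hr; inversion H0 as [Gd|u w Gu Hsu]; first done.
    exfalso; have := hE _ _ Gu; destruct u as [k t1|t1|t1|t1|t1] => //= Ht; subst t1.
    have := ct_Pb (t:=t) hE (clos_tn1_trans _ _ _ _ Hsu); rewrite /=; lia.
  have GR : G (Rw t.+1) (Ret t.+1) by apply/hR; split; [apply: leqnn|left].
  exists (Sd i t.+1), (cons (Rw t.+1) (cons (Ret t.+1) nil)); rewrite /single /=.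
  split; first done. split; first done. split.
    constructor; [simpl; intros [H1|[H1|[]]]; discriminate|].
    constructor; [simpl; intros [H1|[]]; discriminate|].
    constructor; [intros []|constructor].
  split; first by split; [left|split; [left|]].
  split; first by move=> [_ H]; have := hE _ _ H.
  by split => //; move=> _ [H1|[H1|[j [H1 _]]]].
move=> [x [p [Hx [Hl [_ [Hw Ha]]]]]].
apply: NNPP => nR.
rewrite /single in Hx; subst x.
case: p Hl Hw Ha => [|y p] Hl Hw Ha; first by [].
pose Z := cond_R G t.
have ZAt : Z (A t) by left.
have NFZ : forall w, NF G t w -> ~ Z w.
  move=> w Nw [Hw1|[Hw1|[j [Hw1 _]]]]; subst w => //=; move: Nw => /= [? _]; lia.
have SkZ : forall w, Sink w -> ~ Z w.
  by move=> w Nw [Hw1|[Hw1|[j [Hw1 _]]]]; subst w.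
pose Inv := fun u v => adj G u v /\
  ((G u v /\ NF G t v) \/ Past t v \/ (v = A t /\ G v u)).
have sinkint : forall x y z, adj G x y -> adj G y z -> Sink y ->
    ((G x y /\ G z y) -> anc_of G Z y) -> False.
  move=> x0 y0 z0 [Gxy|Gyx] [Gyz|Gzy] Sy h1.
  - by have := hE _ _ Gyz; move: Sy; destruct y0; destruct z0.
  - exact: (no_anc (Q := @Sink d) (Sink_closed hE) SkZ Sy (h1 (conj Gxy Gzy))).
  - by have := hE _ _ Gyx; move: Sy; destruct y0; destruct x0.
  - by have := hE _ _ Gyx; move: Sy; destruct y0; destruct x0.
have step : forall x y z, Inv x y -> adj G y z ->
     ((G x y /\ G z y) -> anc_of G Z y) ->
     (~(G x y /\ G z y) -> ~ Z y) -> Inv y z.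
  move=> x0 y0 z0 [Axy Hi] Ayz h1 h2; split => //.
  case: Hi => [[Gxy Ny]|[Py|[Hy Gyx]]].
  - case: Ayz => [Gyz|Gzy].
      by left; split => //; exact: (NF_closed hE Gyz Ny).
    exfalso; exact: (no_anc (Q := NF G t) (fun u v => NF_closed (t:=t) hE (u:=u) (v:=v)) NFZ Ny (h1 (conj Gxy Gzy))).
  - destruct y0 as [j t1|t1|t1|t1|t1]; simpl in Py.
    + case: Ayz => [Gyz|Gzy].
        have Ae := hE _ _ Gyz.
        have blockZ : Z (Sd j t1) -> False.
          move=> Zy; apply: h2 Zy => [[_ Gzy]]; exact: (no2cycle hE Gyz Gzy).
        destruct z0 as [k t2|t2|t2|t2|t2]; simpl in Ae => //.
        * case: Ae => Ht2 Himp.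
          case: (Nat.le_gt_cases t2 t) => Hc; first by right; left.
          have Ht1 : t1 = t by lia. subst t1.
          case: (classic (in_r G j t)) => Hj.
            by exfalso; apply: blockZ; right; right; exists j.
          left; split => //; split; first lia.
          by move/Himp.
        * case: Ae => Ht2 Hj; subst t2.
          case: (Nat.lt_ge_cases t1 t) => Hc; first by right; left.
          have Ht1 : t1 = t by lia. subst t1.
          by exfalso; apply: blockZ; right; right; exists j.
        * by right; left.
        * by right; left => /=; lia.
      have Ae := hE _ _ Gzy.
      destruct z0 as [k t2|t2|t2|t2|t2]; simpl in Ae => //; right; left => /=; lia.
    + case: Ayz => [Gyz|Gzy]; [have Ae := hE _ _ Gyz | have Ae := hE _ _ Gzy];
      destruct z0 as [k t2|t2|t2|t2|t2]; simpl in Ae => //; right; left => /=; lia.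
    + by exfalso; apply: (sinkint x0 (O t1) z0).
    + case: Ayz => [Gyz|Gzy]; [have Ae := hE _ _ Gyz | have Ae := hE _ _ Gzy];
      destruct z0 as [k t2|t2|t2|t2|t2]; simpl in Ae => //; right; left => /=; lia.
    + by exfalso; apply: (sinkint x0 (Ret t1) z0).
  - subst y0; exfalso; apply: h2 ZAt => [[Gxy _]]; exact: (no2cycle hE Gxy Gyx).
have init : Inv (Sd i t.+1) y.
  move: Hw => /= [Asy _]; split => //.
  case: Asy => [Gsy|Gys].
    left; split => //; apply: (NF_closed hE Gsy) => /=; split => //; lia.
  move: (hE _ _ Gys) => Ay.
  destruct y as [o n|n|n|n|n]; simpl in Ay; try done.
  - by right; left => /=; case: Ay => ? _; lia.
  - have Hn : n = t by lia.
    by subst n; right; right.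
have [u [_ Hu]] := walk_inv step Hw Ha init.
move: Hl; rewrite last_cons_eq /single => Hl; rewrite Hl in Hu.
case: Hu => [[_ /= Hu]|[/= Hu|[Hu _]]] //; lia.
Qed.

Theorem proposition3 (d : nat) (G : node d -> node d -> Prop) (gamma : R)
  (hgamma : (0 <= gamma <= 1)%R)
  (indep : (node d -> Prop) -> (node d -> Prop) -> (node d -> Prop) -> Prop)
  (hG : env_graph G gamma)
  (hM : markov G indep) (hF : faithful G indep)
  (t : nat) (i : 'I_d) :
  let s := Sd i t.+1 in
  (in_ar G i t.+1 <->
     ~ indep (single s) (single (Ret t.+1)) (cond_R G t) /\
     ~ indep (single s) (single (A t)) (@cond_a d t)) /\
  (in_nar G i t.+1 <->
     ~ indep (single s) (single (Ret t.+1)) (cond_R G t) /\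
     indep (single s) (single (A t)) (@cond_a d t)) /\
  (in_anr G i t.+1 <->
     indep (single s) (single (Ret t.+1)) (cond_R G t) /\
     ~ indep (single s) (single (A t)) (@cond_a d t)) /\
  (in_nanr G i t.+1 <->
     indep (single s) (single (Ret t.+1)) (cond_R G t) /\
     indep (single s) (single (A t)) (@cond_a d t)).
Proof.
move=> s.
case: hG => hE hR.
have Da : disjoint3 (single s) (single (A t)) (@cond_a d t).
  rewrite /single /s; split; [|split].
  - by move=> v -> .
  - by move=> v -> [j [_ H]]; lia.
  - by move=> v -> [j H].
have DR : disjoint3 (single s) (single (Ret t.+1)) (cond_R G t).
  rewrite /single /s; split; [|split].
  - by move=> v -> .
  - by move=> v -> [H|[H|[j [H _]]]] //; case: H => _ ?; lia.
  - by move=> v -> [H|[H|[j [H _]]]].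
have eqa : indep (single s) (single (A t)) (@cond_a d t) <->
   ~ d_connected G (single s) (single (A t)) (@cond_a d t).
  by split; [exact: hF _ _ _ Da | exact: hM _ _ _ Da].
have eqR : indep (single s) (single (Ret t.+1)) (cond_R G t) <->
   ~ d_connected G (single s) (single (Ret t.+1)) (cond_R G t).
  by split; [exact: hF _ _ _ DR | exact: hM _ _ _ DR].
have pa := part_a hE t i.
have pb := part_b hE hR t i.
rewrite /in_nanr /in_anr /in_nar /in_ar /in_a.
rewrite /s in eqa eqR.
case: (classic (d_connected G (single (Sd i t.+1)) (single (A t)) (@cond_a d t)));
case: (classic (d_connected G (single (Sd i t.+1)) (single (Ret t.+1)) (cond_R G t)));
tauto.
Qed.
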